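(* If the toric algebra $A_{\mathscr{E}}$ is consistent, then $\ker(\pi)$ equals the subgroup $L\subseteq\mathbb{Z}^{Q_1}$ generated by the vectors $v(p^+)-v(p^-)$ for which there is $q\in\mathscr{P}$ with $\partial_qW=p^++p^-$; that is, the quotient map $\operatorname{wt}:\mathbb{Z}^{Q_1}\to\Lambda=\mathbb{Z}^{Q_1}/L$ coincides with $\pi:\mathbb{Z}^{Q_1}\to\mathbb{Z}(Q)$. In particular, $A_{\mathscr{E}}$ is graded by the semigroup $\Lambda_+=\operatorname{wt}(\mathbb{N}^{Q_1})=\mathbb{N}(Q)$, a path $p$ having degree $\pi(v(p))$.
   Context: Let $\mathbb{k}$ be an algebraically closed field and $X=\operatorname{Spec}R$ a normal affine toric variety of dimension $n$ with a torus-fixed point, $R=\mathbb{k}[\sigma^\vee\cap M]$, $\sigma\subset N\otimes\mathbb{R}$ strongly convex rational polyhedral. Let $\sigma(1)$ be the rays, $d=|\sigma(1)|$, $v_\rho$ primitive generators, $D_\rho$ toric prime divisors, torus-invariant divisors identified with $\mathbb{Z}^d$, $\deg:\mathbb{Z}^d\to\operatorname{Cl}(X)$ the class map. Cox ring $\mathbb{k}[x_\rho]$, $x^D=\prod x_\rho^{D_\rho}$. Assume $X$ is Gorenstein: $(1,\dots,1)\in\mathbb{Z}^d$ lies in the image of $M$ under $u\mapsto\sum\langle u,v_\rho\rangle D_\rho$. Let $\mathscr{E}=(E_0=\mathcal{O}_X,E_1,\dots,E_r)$ be pairwise distinct rank one reflexive sheaves, $E_i=\mathcal{O}_X(D_i')$,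 and $Q$ its quiver of sections: vertices $0,\dots,r$; an arrow $a:i\to j$ with label $\operatorname{div}(a)\in\mathbb{N}^d$ for each irreducible $T_M$-invariant section $x^{\operatorname{div}(a)}$ of $\operatorname{Hom}(E_i,E_j)\cong H^0(\mathcal{O}_X(D_j'-D_i'))$ (irreducible: not in the image of multiplication through any $E_k$, $k\neq i,j$). Paths compose right to left; $\operatorname{div}(p)$ is the sum of labels of arrows of $p$; $v(p)=\sum_a(\text{number of times }a\text{ occurs in }p)\chi_a\in\mathbb{Z}^{Q_1}$. $J_{\mathscr{E}}$ is generated by $p^+-p^-$ over pairs of paths with equal head, tail and label; $A_{\mathscr{E}}=\mathbb{k}Q/J_{\mathscr{E}}$. A cycle $p$ is anticanonical if $x^{\operatorname{div}(p)}=\prod_\rho x_\rho$. For a path $q$, $\partial_qW$ is the sum of all paths $p$ such that $pq$ is an anticanonical cycle. $\mathscr{P}$ is the set of paths $q$ with $\partial_qW$ a sum of precisely two paths sharing neither initial nor final arrow; $J_W$ is generated by $p^+-p^-$ whenever $\partial_qW=p^++p^-$, $q\in\mathscr{P}$. $A_{\mathscr{E}}$ is consistent if $J_W=J_{\mathscr{E}}$. $\operatorname{Wt}(Q)=\{\theta\in\mathbb{Z}^{Q_0}:\sum\theta_i=0\}$; $\pi:\mathbb{Z}^{Q_1}\to\operatorname{Wt}(Q)\oplus\mathbb{Z}^d$, $\chi_a\mapsto(\chi_{\mathsf{h}(a)}-\chi_{\mathsf{t}(a)},\operatorname{div}(a))$; $\mathbb{Z}(Q)=\pi(\mathbb{Z}^{Q_1})$,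 $\mathbb{N}(Q)=\pi(\mathbb{N}^{Q_1})$. *)

(* Defs.v *)
From mathcomp Require Import all_boot all_order all_algebra.
Set Implicit Arguments. Unset Strict Implicit. Unset Printing Implicit Defensive.
Import Order.TTheory GRing.Theory Num.Theory.
Local Open Scope ring_scope.

(* Toric data: N = M = Z^n, rays v_rho (rho < d), the cone sigma is    *)
(* the cone spanned by the v_rho.                                      *)
Section Toric.
Variables (n d : nat) (v : 'I_d -> 'I_n -> int).

Definition pairing (u : 'I_n -> int) (rho : 'I_d) : int :=
  \sum_(i < n) u i * v rho i.

Definition primitive_vec (w : 'I_n -> int) : Prop :=
  forall m : int, 0 < m -> (forall i, (m %| w i)%Z) -> m = 1.

(* sigma /\ -sigma = {0} *)
Definition strongly_convex : Prop :=
  forall c : 'I_d -> rat, (forall rho, 0 <= c rho) ->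
    (forall i, \sum_(rho < d) c rho * (v rho i)%:~R = 0) ->
    forall rho, c rho = 0.

(* every v_rho spans an extremal ray (so the v_rho are exactly the rays) *)
Definition extremal_rays : Prop :=
  forall rho : 'I_d, ~ exists c : 'I_d -> rat,
    [/\ forall r, 0 <= c r, c rho = 0 &
        forall i, (v rho i)%:~R = \sum_(r < d) c r * (v r i)%:~R].

(* sigma is full dimensional (X has a torus-fixed point) *)
Definition full_dim : Prop :=
  forall u : 'I_n -> int, (forall rho, pairing u rho = 0) -> forall i, u i = 0.

Definition toric_cone_data : Prop :=
  [/\ forall rho, primitive_vec (v rho), strongly_convex, extremal_rays & full_dim].

(* (1,...,1) is the divisor of a character u in M *)
Definition gorenstein : Prop := exists u, forall rho, pairing u rho = 1.

(* torus-invariant divisors are Z^d; D ~ D' iff D - D' = div(chi^u) *)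
Definition lin_equiv (D D' : 'I_d -> int) : Prop :=
  exists u, forall rho, D rho = D' rho + pairing u rho.

(* x^E is a T_M-invariant section of O_X(D): E effective, E ~ D *)
Definition is_section (D : 'I_d -> int) (E : 'I_d -> nat) : Prop :=
  exists u, forall rho, (E rho)%:Z = D rho + pairing u rho.

Variables (r : nat) (D' : 'I_r.+1 -> 'I_d -> int).

(* E_0 = O_X and the E_i pairwise distinct (non-isomorphic) *)
Definition collection_ok : Prop :=
  lin_equiv (D' ord0) (fun _ => 0) /\
  forall i j, i != j -> ~ lin_equiv (D' i) (D' j).

(* sections of Hom(E_i, E_j) = H^0(O_X(D'_j - D'_i)) *)
Definition hom_section (i j : 'I_r.+1) (E : 'I_d -> nat) : Prop :=
  is_section (fun rho => D' j rho - D' i rho) E.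

(* irreducible T_M-invariant section (identities, i.e. label 0, excluded) *)
Definition irreducible_section (i j : 'I_r.+1) (E : 'I_d -> nat) : Prop :=
  [/\ hom_section i j E, exists rho, E rho != 0%N &
      ~ exists k, [/\ k != i, k != j & exists E1 E2,
          [/\ hom_section i k E1, hom_section k j E2 &
              forall rho, E rho = (E1 rho + E2 rho)%N]]].

Variables (Q1 : finType) (hd tl : Q1 -> 'I_r.+1) (dv : Q1 -> 'I_d -> nat).

Definition is_quiver_of_sections : Prop :=
  [/\ forall a, irreducible_section (tl a) (hd a) (dv a),
      forall i j E, irreducible_section i j E ->
        exists a, [/\ tl a = i, hd a = j & forall rho, dv a rho = E rho] &
      forall a b, tl a = tl b -> hd a = hd b ->
        (forall rho, dv a rho = dv b rho) -> a = b].

End Toric.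

Section Paths.
Variables (r d : nat) (Q1 : finType) (hd tl : Q1 -> 'I_r.+1)
  (dv : Q1 -> 'I_d -> nat).

(* a path = (tail vertex, arrows in the order traversed) *)
Definition qpath := ('I_r.+1 * seq Q1)%type.

Fixpoint chain (x : 'I_r.+1) (s : seq Q1) : bool :=
  if s is a :: s' then (tl a == x) && chain (hd a) s' else true.

Definition validp (p : qpath) : bool := chain p.1 p.2.
Definition ptail (p : qpath) : 'I_r.+1 := p.1.
Definition phead (p : qpath) : 'I_r.+1 := last p.1 [seq hd a | a <- p.2].
Definition pdiv (p : qpath) (rho : 'I_d) : nat := (\sum_(a <- p.2) dv a rho)%N.

(* composite pq (first q, then p); None if not composable *)
Definition pcomp (p q : qpath) : option qpath :=
  if phead q == ptail p then Some (ptail q, q.2 ++ p.2) else None.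

Definition anticanonical_cycle (c : qpath) : Prop :=
  [/\ validp c, phead c = ptail c & forall rho, pdiv c rho = 1%N].

(* p occurs in d_q W *)
Definition in_dW (q p : qpath) : Prop :=
  exists c, pcomp p q = Some c /\ anticanonical_cycle c.

Definition initial_arrow (p : qpath) : option Q1 := ohead p.2.
Definition final_arrow (p : qpath) : option Q1 := ohead (rev p.2).

(* q in P and d_q W = p1 + p2 *)
Definition dW_pair (q p1 p2 : qpath) : Prop :=
  [/\ validp q, validp p1, validp p2 & p1 <> p2] /\
  (forall p, validp p -> (in_dW q p <-> p = p1 \/ p = p2)) /\
  initial_arrow p1 <> initial_arrow p2 /\
  final_arrow p1 <> final_arrow p2.

(* generating binomials of J_E and J_W *)
Definition gensE (s : qpath * qpath) : Prop :=
  [/\ validp s.1, validp s.2, ptail s.1 = ptail s.2, phead s.1 = phead s.2 &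
      forall rho, pdiv s.1 rho = pdiv s.2 rho].
Definition gensW (s : qpath * qpath) : Prop := exists q, dW_pair q s.1 s.2.

(* path algebra kQ: elements are k-valued functions on paths; the
   two-sided ideal generated by binomials p+ - p- (s in S) consists of the
   finite sums  sum c * u (p+ - p-) w  with u, w paths. *)
Variable k : fieldType.

Definition mul3 (u s w : qpath) : option qpath := obind (pcomp u) (pcomp s w).

Definition ind_opt (o : option qpath) (x : qpath) : k :=
  if o is Some y then (y == x)%:R else 0.

Definition binom_term (s : qpath * qpath) (u w : qpath) (x : qpath) : k :=
  ind_opt (mul3 u s.1 w) x - ind_opt (mul3 u s.2 w) x.

Definition in_ideal (S : qpath * qpath -> Prop) (f : qpath -> k) : Prop :=
  exists l : seq (k * qpath * (qpath * qpath) * qpath),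
    (forall t, t \in l -> [/\ validp t.1.1.2, S t.1.2 & validp t.2]) /\
    forall x, f x = \sum_(t <- l) t.1.1.1 * binom_term t.1.2 t.1.1.2 t.2 x.

Definition consistent : Prop :=
  forall f : qpath -> k, in_ideal gensW f <-> in_ideal gensE f.

Definition vpath (p : qpath) : {ffun Q1 -> int} :=
  [ffun a => (count_mem a p.2)%:Z].

(* ker(pi), pi : Z^{Q1} -> Wt(Q) (+) Z^d *)
Definition in_ker_pi (x : {ffun Q1 -> int}) : Prop :=
  (forall i : 'I_r.+1,
     \sum_(a : Q1) x a * ((hd a == i)%:R - (tl a == i)%:R) = 0 :> int) /\
  (forall rho : 'I_d, \sum_(a : Q1) x a * (dv a rho)%:Z = 0).

Inductive in_L : {ffun Q1 -> int} -> Prop :=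
  | L0 : in_L 0
  | LD x y : in_L x -> in_L y -> in_L (x + y)
  | LN x : in_L x -> in_L (- x)
  | Lgen q p1 p2 : dW_pair q p1 p2 -> in_L (vpath p1 - vpath p2).

End Paths.

(* Main.v *)
Require Import Defs.
From mathcomp Require Import all_boot all_order all_algebra.
From Stdlib Require Import Classical ClassicalEpsilon Lia.
From mathcomp Require Import zify ring lra.
Set Implicit Arguments. Unset Strict Implicit. Unset Printing Implicit Defensive.
Import Order.TTheory GRing.Theory Num.Theory.
Local Open Scope ring_scope.

Section P.
Variables (r d : nat) (Q1 : finType) (hd tl : Q1 -> 'I_r.+1)
  (dv : Q1 -> 'I_d -> nat).

Lemma chain_cat x s1 s2 : chain hd tl x (s1 ++ s2) =
  chain hd tl x s1 && chain hd tl (last x [seq hd a | a <- s1]) s2.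
Proof. by elim: s1 x => [|a s IH] x //=; rewrite IH andbA. Qed.

Lemma pdivE (p : qpath r Q1) rho :
  (Defs.pdiv dv p rho)%:Z = \sum_(a : Q1) vpath p a * (dv a rho)%:Z.
Proof.
rewrite /Defs.pdiv /vpath; case: p => x s /=.
elim: s => [|b s IH].
  by rewrite big_nil big1 // => a _; rewrite ffunE mul0r.
rewrite big_cons PoszD IH (bigD1 b) //= [in RHS](bigD1 b) //= !ffunE /= eqxx.
rewrite addrA; congr (_ + _).
apply: eq_bigr => a /negPf ab; rewrite !ffunE /= eq_sym ab //.
Qed.

Lemma bdryE (x : 'I_r.+1) s i : chain hd tl x s ->
  \sum_(a : Q1) (count_mem a s)%:Z * ((hd a == i)%:R - (tl a == i)%:R)
  = ((last x [seq hd a | a <- s] == i)%:R - (x == i)%:R :> int).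
Proof.
elim: s x => [|b s IH] x /=.
  by move=> _; rewrite big1 ?subrr // => a _; rewrite mul0r.
case/andP => /eqP tb cs.
have IH' := IH _ cs; rewrite (bigD1 b) //= in IH'.
rewrite (bigD1 b) //= eqxx.
have -> : \sum_(i0 | i0 != b) ((b == i0) + count_mem i0 s)%:Z * ((hd i0 == i)%:R - (tl i0 == i)%:R)
   = \sum_(i0 | i0 != b) (count_mem i0 s)%:Z * ((hd i0 == i)%:R - (tl i0 == i)%:R).
  by apply: eq_bigr => a ab; rewrite eq_sym (negPf ab).
rewrite PoszD mulrDl mul1r -addrA IH' tb.
by rewrite addrC addrA subrK.
Qed.

End P.
Section Q.
Variables (r d : nat) (Q1 : finType) (hd tl : Q1 -> 'I_r.+1)
  (dv : Q1 -> 'I_d -> nat).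

Lemma in_dW_prop (q p : qpath r Q1) : in_dW hd tl dv q p ->
  [/\ ptail p = phead hd q, phead hd p = ptail q &
      forall rho, (Defs.pdiv dv p rho + Defs.pdiv dv q rho = 1)%N].
Proof.
case=> c [hc [vc hc2 hc3]].
move: hc vc hc2 hc3; rewrite /Defs.pcomp; case: (phead hd q =P ptail p) => // E [<-] vc hc2 hc3.
split => //.
  move: hc2; rewrite /phead /ptail /= map_cat last_cat.
  by rewrite -/(phead hd q) E.
move=> rho; move: (hc3 rho); rewrite /Defs.pdiv /= big_cat /=.
by rewrite addnC.
Qed.

Lemma dW_ends q p1 p2 : dW_pair hd tl dv q p1 p2 ->
  [/\ ptail p1 = ptail p2, phead hd p1 = phead hd p2 &
      forall rho, Defs.pdiv dv p1 rho = Defs.pdiv dv p2 rho].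
Proof.
case=> [[_ v1 v2 _] [H _]].
have [a1 b1 c1] := in_dW_prop ((H p1 v1).2 (or_introl erefl)).
have [a2 b2 c2] := in_dW_prop ((H p2 v2).2 (or_intror erefl)).
split; first by rewrite a1 a2.
  by rewrite b1 b2.
move=> rho; move: (c1 rho) (c2 rho) => e1; rewrite -e1 => /eqP.
by rewrite eqn_add2r => /eqP.
Qed.

Lemma vpath_ker (p1 p2 : qpath r Q1) : validp hd tl p1 -> validp hd tl p2 ->
  ptail p1 = ptail p2 -> phead hd p1 = phead hd p2 ->
  (forall rho, Defs.pdiv dv p1 rho = Defs.pdiv dv p2 rho) ->
  in_ker_pi hd tl dv (vpath p1 - vpath p2).
Proof.
move=> v1 v2 t12 h12 d12; split.
  move=> i.
  under eq_bigr do rewrite !ffunE mulrBl.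
  rewrite sumrB (bdryE i v1) (bdryE i v2).
  by move: t12 h12; rewrite /ptail /phead => -> ->; rewrite subrr.
move=> rho.
have e1 := pdivE dv p1 rho; have e2 := pdivE dv p2 rho.
rewrite (eq_bigr (fun a => (count_mem a p1.2)%:Z * (dv a rho)%:Z)) in e1; last by move=> a _; rewrite ffunE.
rewrite (eq_bigr (fun a => (count_mem a p2.2)%:Z * (dv a rho)%:Z)) in e2; last by move=> a _; rewrite ffunE.
under eq_bigr do rewrite !ffunE mulrBl.
by rewrite sumrB -e1 -e2 d12 subrr.
Qed.

Lemma inL_ker x : in_L hd tl dv x -> in_ker_pi hd tl dv x.
Proof.
elim => {x}.
- split=> [i|rho]; by rewrite big1 // => a _; rewrite ffunE mul0r.
- move=> x y _ [Hx1 Hx2] _ [Hy1 Hy2]; split=> [i|rho].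
    under eq_bigr do rewrite ffunE mulrDl.
    by rewrite big_split /= Hx1 Hy1 addr0.
  under eq_bigr do rewrite ffunE mulrDl.
  by rewrite big_split /= Hx2 Hy2 addr0.
- move=> x _ [Hx1 Hx2]; split=> [i|rho].
    under eq_bigr do rewrite ffunE mulNr.
    by rewrite sumrN Hx1 oppr0.
  under eq_bigr do rewrite ffunE mulNr.
  by rewrite sumrN Hx2 oppr0.
- move=> q p1 p2 H; have [t h dd] := dW_ends H.
  case: H => [[_ v1 v2 _] _].
  exact: vpath_ker.
Qed.
End Q.

Definition PB (P : Prop) : bool :=
  if excluded_middle_informative P then true else false.
Lemma PBE (P : Prop) : PB P = true <-> P.
Proof. by rewrite /PB; case: excluded_middle_informative. Qed.

Section B.
Variables (r d : nat) (Q1 : finType) (hd tl : Q1 -> 'I_r.+1)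
  (dv : Q1 -> 'I_d -> nat) (k : fieldType).

Lemma mul3E (u s w : qpath r Q1) : mul3 hd u s w =
  if (phead hd w == ptail s) && (phead hd s == ptail u)
  then Some (ptail w, w.2 ++ s.2 ++ u.2) else None.
Proof.
rewrite /mul3 /Defs.pcomp; case: (phead hd w =P ptail s) => E //=.
have -> : phead hd (ptail w, w.2 ++ s.2) = phead hd s.
  by rewrite /phead /= map_cat last_cat -/(phead hd w) E.
by case: ifP => //; rewrite catA.
Qed.

Lemma sum_ind (U : seq (qpath r Q1)) (B : pred (qpath r Q1)) o : uniq U ->
  \sum_(x <- U | B x) ind_opt k o x =
  if o is Some y then ((y \in U) && B y)%:R else 0.
Proof.
case: o => [y|]; last by move=> _; rewrite big1.
elim: U => [|a U IH] /=; first by rewrite big_nil.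
case/andP => aU uU; rewrite big_cons IH // in_cons.
case: (eqVneq y a) => [ya|ya] /=.
  subst a; rewrite (negPf aU) /=.
  by case: (B y); rewrite ?addr0.
by case: (B a) => //; rewrite add0r.
Qed.

Lemma JW_L (p p' : qpath r Q1) :
  in_ideal hd tl (gensW hd tl dv)
    (fun x => ind_opt k (Some p) x - ind_opt k (Some p') x) ->
  in_L hd tl dv (vpath p - vpath p').
Proof.
move=> [l [Hl Hf]].
apply: NNPP => HL.
have pp' : p != p'.
  by apply/eqP => E; apply: HL; rewrite E subrr; exact: L0.
pose P (x : qpath r Q1) := in_L hd tl dv (vpath p - vpath x).
pose B := fun x : qpath r Q1 => PB (P x).
pose res (t : k * qpath r Q1 * (qpath r Q1 * qpath r Q1) * qpath r Q1) :=
  oapp (fun y => [:: y]) [::] (mul3 hd t.1.1.2 t.1.2.1 t.2) ++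
  oapp (fun y => [:: y]) [::] (mul3 hd t.1.1.2 t.1.2.2 t.2).
pose U := undup (p :: p' :: flatten [seq res t | t <- l]).
have uU : uniq U by exact: undup_uniq.
pose S := \sum_(x <- U | B x) (ind_opt k (Some p) x - ind_opt k (Some p') x).
have S1 : S = 1.
  rewrite /S sumrB !sum_ind // !mem_undup !in_cons !eqxx /= orbT /=.
  have -> : B p = true by apply/PBE; rewrite /P subrr; exact: L0.
  have -> : B p' = false by apply/negP => /PBE.
  by rewrite subr0.
have S0 : S = 0.
  rewrite /S (eq_bigr _ (fun x _ => Hf x)) exchange_big /=.
  apply: big1_seq => t /andP [_ tl'].
  rewrite -mulr_sumr; apply/eqP; rewrite mulf_eq0; apply/orP; right.
  rewrite /binom_term sumrB !sum_ind //.
  have [_ [q Hq] _] := Hl t tl'.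
  have [et eh ed] := dW_ends Hq.
  have inU y : y \in res t -> y \in U.
    by move=> yr; rewrite mem_undup !in_cons; apply/orP; right; apply/orP; right;
       apply/flatten_mapP; exists t.
  move: inU; rewrite /res !mul3E -et -eh.
  case: ifP => [_ inU|_ _]; last by rewrite subrr.
  rewrite !inU /= ?in_cons ?eqxx ?orbT //=.
  set y1 := (_, _); set y2 := (_, _).
  have Ly : in_L hd tl dv (vpath y1 - vpath y2).
    have -> : vpath y1 - vpath y2 = vpath t.1.2.1 - vpath t.1.2.2.
      apply/ffunP => a; rewrite !ffunE /= !count_cat !PoszD.
      by rewrite [X in X - _]addrCA [X in _ - X]addrCA opprD addrACA subrr addr0.
    exact: (Lgen Hq).
  have -> : B y1 = B y2.
    apply/idP/idP => /PBE Hy; apply/PBE; rewrite /P.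
      have := LD Hy Ly; by rewrite addrA subrK.
    have := LD Hy (LN Ly); by rewrite opprB addrA subrK.
  by rewrite subrr.
by move: (oner_neq0 k); rewrite -S1 S0 eqxx.
Qed.
End B.

Section R.
Variables (n d r : nat) (v : 'I_d -> 'I_n -> int) (D' : 'I_r.+1 -> 'I_d -> int)
  (Q1 : finType) (hd tl : Q1 -> 'I_r.+1) (dv : Q1 -> 'I_d -> nat).
Hypotheses (Hg : gorenstein v) (Hc : collection_ok v D')
  (Hq : is_quiver_of_sections v D' hd tl dv).

Lemma zero_sec i j E : hom_section v D' i j E -> (forall rho, E rho = 0%N) -> i = j.
Proof.
move=> [u Hu] E0; apply: NNPP => /eqP ij.
apply: (Hc.2 i j ij); exists u => rho.
move: (Hu rho); rewrite E0 => H.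
apply/eqP; rewrite -subr_eq0 (_ : D' i rho - (D' j rho + pairing v u rho) = - (D' j rho - D' i rho + pairing v u rho)); first by rewrite -H oppr0.
ring.
Qed.

Lemma pairing_scale (u : 'I_n -> int) (m : int) rho :
  pairing v (fun t => m * u t) rho = m * pairing v u rho.
Proof. by rewrite /pairing mulr_sumr; apply: eq_bigr => t _; rewrite mulrA. Qed.

Lemma sec_exists i j : exists E, hom_section v D' i j E.
Proof.
have [u0 Hu0] := Hg.
pose c rho := D' j rho - D' i rho.
pose m := \sum_rho `|c rho|.
have cm rho : 0 <= c rho + m.
  have h1 : - `|c rho| <= c rho by have := lexx `|c rho|; rewrite ler_norml => /andP [].
  have h2 : `|c rho| <= m.
    rewrite /m (bigD1 rho) //= lerDl; apply: sumr_ge0 => t _; exact: normr_ge0.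
  lra.
exists (fun rho => absz (c rho + m)); exists (fun t => m * u0 t) => rho.
by rewrite gez0_abs // pairing_scale Hu0 mulr1.
Qed.

Lemma sec_path_aux N : forall i j E, (\sum_rho E rho <= N)%N ->
  hom_section v D' i j E ->
  exists s, chain hd tl i s && (last i [seq hd a | a <- s] == j).
Proof.
elim: N => [|N IH] i j E.
  rewrite leqn0 sum_nat_eq0 => /forallP E0 H.
  have ij := zero_sec H (fun rho => eqP (E0 rho)); subst j.
  by exists [::]; rewrite /= eqxx.
move=> Hs H.
case: (classic (exists rho, E rho != 0%N)) => [nz|z]; last first.
  have E0 : forall rho, E rho = 0%N.
    by move=> rho; apply/eqP; apply: negbNE; apply/negP => h; apply: z; exists rho.
  have ij := zero_sec H E0; subst j.
  by exists [::]; rewrite /= eqxx.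
case: (classic (irreducible_section v D' i j E)) => [irr|nirr].
  have [_ Hq2 _] := Hq; have [a [ta ha _]] := Hq2 i j E irr.
  by exists [:: a]; rewrite /= ta ha !eqxx.
have : exists k, [/\ k != i, k != j & exists E1 E2,
          [/\ hom_section v D' i k E1, hom_section v D' k j E2 &
              forall rho, E rho = (E1 rho + E2 rho)%N]].
  by apply: NNPP => h; apply: nirr; split.
move=> [k [ki kj [E1 [E2 [H1 H2 HE]]]]].
have sE : (\sum_rho E rho = \sum_rho E1 rho + \sum_rho E2 rho)%N.
  by rewrite -big_split; apply: eq_bigr => rho _; rewrite HE.
have pos2 : (0 < \sum_rho E2 rho)%N.
  rewrite lt0n sum_nat_eq0; apply/negP => /forallP E0.
  by move/eqP: kj; apply; exact: zero_sec H2 (fun rho => eqP (E0 rho)).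
have pos1 : (0 < \sum_rho E1 rho)%N.
  rewrite lt0n sum_nat_eq0; apply/negP => /forallP E0.
  have := zero_sec H1 (fun rho => eqP (E0 rho)) => ik.
  by move/eqP: ki; apply.
have [s1 /andP [c1 /eqP l1]] : exists s, chain hd tl i s && (last i [seq hd a | a <- s] == k).
  by apply: (IH _ _ E1) => //; move: Hs; rewrite sE; lia.
have [s2 /andP [c2 /eqP l2]] : exists s, chain hd tl k s && (last k [seq hd a | a <- s] == j).
  by apply: (IH _ _ E2) => //; move: Hs; rewrite sE; lia.
exists (s1 ++ s2); rewrite chain_cat c1 l1 c2 /= map_cat last_cat l1 l2 eqxx //.
Qed.

Lemma reach i j : exists s, chain hd tl i s && (last i [seq hd a | a <- s] == j).
Proof.
have [E HE] := sec_exists i j.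
exact: (@sec_path_aux (\sum_rho E rho) i j E (leqnn _) HE).
Qed.
End R.

Lemma sum_delta (T : finType) (f : T -> int) (j : T) :
  \sum_i f i * (j == i)%:R = f j.
Proof.
rewrite (bigD1 j) //= eqxx mulr1 big1 ?addr0 // => i ij.
by rewrite eq_sym (negPf ij) mulr0.
Qed.

Section M.
Variables (r d : nat) (Q1 : finType) (hd tl : Q1 -> 'I_r.+1)
  (dv : Q1 -> 'I_d -> nat).
Hypothesis Hreach : forall i j : 'I_r.+1,
  exists s, chain hd tl i s && (last i [seq hd a | a <- s] == j).

Definition o : 'I_r.+1 := ord0.
Definition cyc (s : seq Q1) := chain hd tl o s && (last o [seq hd a | a <- s] == o).
Definition cyc_diff (y : {ffun Q1 -> int}) :=
  exists s s', [/\ cyc s, cyc s' & y = vpath (o, s) - vpath (o, s')].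

Lemma vpath_cat (x : 'I_r.+1) s1 s2 :
  vpath (x, s1 ++ s2) = vpath (x, s1) + vpath (x, s2) :> {ffun Q1 -> int}.
Proof. by apply/ffunP => a; rewrite !ffunE /= count_cat PoszD. Qed.

Lemma cyc_cat s1 s2 : cyc s1 -> cyc s2 -> cyc (s1 ++ s2).
Proof.
rewrite /cyc chain_cat map_cat last_cat => /andP [c1 /eqP ->] /andP [c2 /eqP ->].
by rewrite c1 c2 eqxx.
Qed.

Lemma cd0 : cyc_diff 0.
Proof. by exists [::], [::]; split => //; rewrite subrr. Qed.

Lemma cdD y1 y2 : cyc_diff y1 -> cyc_diff y2 -> cyc_diff (y1 + y2).
Proof.
move=> [s1 [s1' [c1 c1' ->]]] [s2 [s2' [c2 c2' ->]]].
exists (s1 ++ s2), (s1' ++ s2'); split; try exact: cyc_cat.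
by rewrite !vpath_cat opprD addrACA.
Qed.

Lemma cdN y : cyc_diff y -> cyc_diff (- y).
Proof.
move=> [s [s' [c c' ->]]]; exists s', s; split => //; by rewrite opprB.
Qed.

Lemma cdMz y z : cyc_diff y -> cyc_diff (y *~ z).
Proof.
move=> cy.
have cn m : cyc_diff (y *+ m).
  elim: m => [|m IH]; first by rewrite mulr0n; exact: cd0.
  by rewrite mulrS; apply: cdD.
case: z => m; first by rewrite -pmulrn.
by rewrite NegzE mulrNz -pmulrn; apply: cdN.
Qed.

Definition sp i := xchoose (Hreach o i).
Definition tp i := xchoose (Hreach i o).

Lemma spP i : chain hd tl o (sp i) /\ last o [seq hd a | a <- sp i] = i.
Proof. by have /andP [h1 /eqP h2] := xchooseP (Hreach o i). Qed.
Lemma tpP i : chain hd tl i (tp i) /\ last i [seq hd a | a <- tp i] = o.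
Proof. by have /andP [h1 /eqP h2] := xchooseP (Hreach i o). Qed.

Definition Ca a := sp (tl a) ++ a :: tp (hd a).
Definition Za a := sp (hd a) ++ tp (hd a).

Lemma cycCa a : cyc (Ca a).
Proof.
have [s1 s2] := spP (tl a); have [t1 t2] := tpP (hd a).
by rewrite /cyc /Ca chain_cat map_cat last_cat s1 s2 /= eqxx t1 t2 eqxx.
Qed.

Lemma cycZa a : cyc (Za a).
Proof.
have [s1 s2] := spP (hd a); have [t1 t2] := tpP (hd a).
by rewrite /cyc /Za chain_cat map_cat last_cat s1 s2 t1 t2 eqxx.
Qed.

Definition g a := vpath (o, Ca a) - vpath (o, Za a).

Lemma gE a a' : g a a' = (a == a')%:R + (count_mem a' (sp (tl a)))%:Z
   - (count_mem a' (sp (hd a)))%:Z.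
Proof.
rewrite /g /Ca /Za !ffunE /= !count_cat /= !PoszD.
case: (a == a'); rewrite /= ?add0n ?add1n; ring.
Qed.

Lemma ker_cyc x : in_ker_pi hd tl dv x -> cyc_diff x.
Proof.
move=> [Kb _].
have -> : x = \sum_a g a *~ x a.
  apply/ffunP => a'; rewrite sum_ffunE.
  under eq_bigr do rewrite ffunMzE mulrzz gE mulrBl mulrDl.
  rewrite sumrB big_split /=.
  have -> : \sum_(a : Q1) (a == a')%:R * x a = x a'.
    by rewrite -[RHS](sum_delta (fun a => x a) a'); apply: eq_bigr => a _;
       rewrite mulrC eq_sym.
  pose cs i := (count_mem a' (sp i))%:Z.
  have H0 : \sum_i \sum_(a : Q1) cs i * (x a * ((hd a == i)%:R - (tl a == i)%:R)) = 0.
    by rewrite big1 // => i _; rewrite -mulr_sumr Kb mulr0.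
  rewrite exchange_big /= in H0.
  have H1 : \sum_(a : Q1) x a * (cs (hd a) - cs (tl a)) = 0.
    rewrite -[RHS]H0; apply: eq_bigr => a _.
    rewrite (eq_bigr (fun i => x a * (cs i * (hd a == i)%:R) - x a * (cs i * (tl a == i)%:R))); last first.
      by move=> i _; ring.
    by rewrite sumrB -!mulr_sumr !sum_delta mulrBr.
  have : \sum_(a : Q1) (cs (tl a) * x a) - \sum_(a : Q1) (cs (hd a) * x a) = - \sum_(a : Q1) x a * (cs (hd a) - cs (tl a)).
    rewrite -sumrB -sumrN; apply: eq_bigr => a _; ring.
  rewrite H1 oppr0 /cs => E; by rewrite -addrA E addr0.
apply: big_ind => //; [exact: cd0 | exact: cdD |].
move=> a _; apply: cdMz; exists (Ca a), (Za a); split => //.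
  exact: cycCa.
exact: cycZa.
Qed.

End M.

Theorem lemma3p14 (k : closedFieldType) (n d r : nat)
  (v : 'I_d -> 'I_n -> int) (D' : 'I_r.+1 -> 'I_d -> int)
  (Q1 : finType) (hd tl : Q1 -> 'I_r.+1) (dv : Q1 -> 'I_d -> nat) :
  toric_cone_data v -> gorenstein v -> collection_ok v D' ->
  is_quiver_of_sections v D' hd tl dv ->
  consistent hd tl dv k ->
  forall x : {ffun Q1 -> int}, in_ker_pi hd tl dv x <-> in_L hd tl dv x.
Proof.
move=> _ Hg Hc Hq Hcons x; split; last exact: inL_ker.
move=> Kx; have Kd := Kx.2.
have Hreach := reach Hg Hc Hq.
have [s [s' [cs cs' Ex]]] := ker_cyc Hreach Kx.
subst x.
have /andP [c1 /eqP h1] := cs; have /andP [c2 /eqP h2] := cs'.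
have dq rho : Defs.pdiv dv (ord0, s) rho = Defs.pdiv dv (ord0, s') rho.
  apply/eqP; rewrite -eqz_nat -subr_eq0 !pdivE -sumrB; apply/eqP.
  by rewrite -[RHS](Kd rho); apply: eq_bigr => a _; rewrite !ffunE mulrBl.
apply: (@JW_L _ _ _ hd tl dv k).
apply: (Hcons _).2.
exists [:: (1, (ord0, [::]), ((ord0, s), (ord0, s')), (ord0, [::]))]; split.
  move=> t; rewrite inE => /eqP -> /=; split => //.
  by split => //=; rewrite /phead /= h1 h2.
move=> y; rewrite big_cons big_nil addr0 mul1r /binom_term !mul3E.
by rewrite /phead /ptail /= h1 h2 eqxx /= !cats0.
Qed.
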